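(* Let $m \le n$ and $1 \le k \le m$. Let $X$ be a positive semidefinite operator on $\mathcal{H}_n \otimes \mathcal{H}_m$, and let $\Phi : \mathcal{L}(\mathcal{H}_m) \to \mathcal{L}(\mathcal{H}_m)$ be completely positive and trace-preserving. Then \[ \|(id_n \otimes \Phi^\dagger)(X)\|_{S(k)} \le \|X\|_{S(k)}. \]
   Context: $\mathcal{H}_d = \mathbb{C}^d$, $\mathcal{L}(\mathcal{H})$ denotes the linear operators on $\mathcal{H}$, $id_n$ is the identity map on $\mathcal{L}(\mathcal{H}_n)$, and $m\le n$. The dual map $\Phi^\dagger$ is defined by $\mathrm{Tr}(\Phi(A)B) = \mathrm{Tr}(A\,\Phi^\dagger(B))$ for all $A,B$. $SR$ denotes Schmidt rank, i.e. the number of nonzero singular values of the coefficient matrix of a vector in $\mathcal{H}_n\otimes\mathcal{H}_m$. $\|Y\|_{S(k)} := \sup\{|\langle w|Y|v\rangle| : |v\rangle,|w\rangle \text{ unit vectors in } \mathcal{H}_n\otimes\mathcal{H}_m, SR(|v\rangle),SR(|w\rangle)\le k\}$. *)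

(* Defs.v *)
From HB Require Import structures.
From mathcomp Require Import all_boot all_order all_algebra.
From mathcomp Require Import complex mxtens.
From mathcomp Require Import boolp classical_sets reals.
Set Implicit Arguments.
Unset Strict Implicit.
Unset Printing Implicit Defensive.
Import Order.TTheory GRing.Theory Num.Theory.
Local Open Scope ring_scope.
Local Open Scope complex_scope.
Local Open Scope classical_set_scope.

Section QDefs.
Variable R : realType.
Local Notation C := R[i].

Definition adjmx (p q : nat) (A : 'M[C]_(p, q)) : 'M[C]_(q, p) :=
  (map_mx Num.conj A)^T.

Definition cmod (z : C) : R := complex.Re `|z|.

Definition psd (N : nat) (X : 'M[C]_N) : Prop :=
  adjmx X = X /\ forall v : 'cV[C]_N, 0 <= (adjmx v *m X *m v) 0 0.

(* Tensor-product basis of H_n (x) H_m = C^(n*m): |i>|a> is the basis vector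
   of index mxtens_index (i, a) = i * m + a (Kronecker convention). *)

Definition id_tens (n m : nat) (Phi : 'M[C]_m -> 'M[C]_m)
  (X : 'M[C]_(n * m)) : 'M[C]_(n * m) :=
  let blk (i j : 'I_n) : 'M[C]_m :=
    \matrix_(a, b) X (mxtens_index (i, a)) (mxtens_index (j, b)) in
  \matrix_(p, q) Phi (blk (mxtens_unindex p).1 (mxtens_unindex q).1)
                     (mxtens_unindex p).2 (mxtens_unindex q).2.

Definition completely_positive (m : nat) (Phi : 'M[C]_m -> 'M[C]_m) : Prop :=
  forall (r : nat) (X : 'M[C]_(r * m)), psd X -> psd (id_tens Phi X).

Definition trace_preserving (m : nat) (Phi : 'M[C]_m -> 'M[C]_m) : Prop :=
  forall A : 'M[C]_m, \tr (Phi A) = \tr A.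

Definition is_dual_map (m : nat) (Phi Psi : 'M[C]_m -> 'M[C]_m) : Prop :=
  forall A B : 'M[C]_m, \tr (Phi A *m B) = \tr (A *m Psi B).

Definition coef_mx (n m : nat) (v : 'cV[C]_(n * m)) : 'M[C]_(n, m) :=
  \matrix_(i, a) v (mxtens_index (i, a)) 0.

Definition schmidt_rank (n m : nat) (v : 'cV[C]_(n * m)) : nat :=
  \rank (coef_mx v).

Definition unit_vec (N : nat) (v : 'cV[C]_N) : Prop :=
  (adjmx v *m v) 0 0 = 1.

Definition S_norm (n m k : nat) (Y : 'M[C]_(n * m)) : R :=
  sup [set r : R | exists (v w : 'cV[C]_(n * m)),
         [/\ unit_vec v, unit_vec w,
             (schmidt_rank v <= k)%N, (schmidt_rank w <= k)%N &
             r = cmod ((adjmx w *m Y *m v) 0 0)]].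

End QDefs.

(* Main.v *)
Require Import Defs.
From HB Require Import structures.
From mathcomp Require Import all_boot all_order all_algebra.
From mathcomp Require Import complex mxtens spectral sesquilinear.
From mathcomp Require Import boolp classical_sets reals.
From mathcomp Require Import ring.
Import Order.TTheory GRing.Theory Num.Theory.
Set Implicit Arguments. Unset Strict Implicit. Unset Printing Implicit Defensive.
Local Open Scope ring_scope.
Section Aux.
Variable R : realType.
Local Notation C := R[i].
Lemma adjmxE p q (A : 'M[C]_(p, q)) i j : adjmx A i j = (A j i)^*.
Proof. by rewrite !mxE. Qed.

Lemma adjmxM p q r (A : 'M[C]_(p, q)) (B : 'M[C]_(q, r)) :
  adjmx (A *m B) = adjmx B *m adjmx A.
Proof. by rewrite /adjmx map_mxM trmx_mul. Qed.

Lemma adjmxK p q (A : 'M[C]_(p, q)) : adjmx (adjmx A) = A.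
Proof. by apply/matrixP=> i j; rewrite !mxE conjCK. Qed.

Lemma adjmxD p q (A B : 'M[C]_(p, q)) : adjmx (A + B) = adjmx A + adjmx B.
Proof. by apply/matrixP=> i j; rewrite !mxE rmorphD. Qed.

Lemma adjmxZ p q (a : C) (A : 'M[C]_(p, q)) : adjmx (a *: A) = a^* *: adjmx A.
Proof. by apply/matrixP=> i j; rewrite !mxE rmorphM. Qed.

Lemma sum_tens (V : nmodType) n m (F : 'I_(n * m) -> V) :
  \sum_(p < n * m) F p = \sum_(i < n) \sum_(a < m) F (mxtens_index (i, a)).
Proof.
rewrite pair_big /=.
rewrite (reindex (fun ij : 'I_n * 'I_m => @mxtens_index n m ij)) /=.
  by apply: eq_bigr => -[i a].
by exists (@mxtens_unindex n m) => p _; rewrite (mxtens_indexK, mxtens_unindexK).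
Qed.



Definition blk n m (M : 'M[C]_(n * m)) (i j : 'I_n) : 'M[C]_m :=
  \matrix_(a, b) M (mxtens_index (i, a)) (mxtens_index (j, b)).

Lemma id_tensE n m (Phi : 'M[C]_m -> 'M[C]_m) (M : 'M[C]_(n * m)) i a j b :
  id_tens Phi M (mxtens_index (i, a)) (mxtens_index (j, b)) = Phi (blk M i j) a b.
Proof. by rewrite /id_tens mxE !mxtens_indexK. Qed.

Lemma tr_mulE m (A B : 'M[C]_m) : \tr (A *m B) = \sum_b \sum_a A b a * B a b.
Proof. by rewrite /mxtrace; apply: eq_bigr => b _; rewrite mxE. Qed.

Lemma dual_lhs n m (Psi : 'M[C]_m -> 'M[C]_m) (X : 'M[C]_(n * m)) (v w : 'cV[C]_(n * m)) :
  (adjmx w *m id_tens Psi X *m v) 0 0 =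
  \sum_j \sum_i \tr (blk (v *m adjmx w) j i *m Psi (blk X i j)).
Proof.
rewrite mxE sum_tens; apply: eq_bigr => j _.
rewrite exchange_big /=; apply: eq_bigr => b _.
rewrite mxE sum_tens mulr_suml; apply: eq_bigr => i _.
rewrite [RHS]mxE mulr_suml; apply: eq_bigr => a _.
rewrite id_tensE !mxE big_ord1 !mxE.
by rewrite [LHS]mulrC mulrA.
Qed.

Lemma dual_rhs n m (Phi : 'M[C]_m -> 'M[C]_m) (X M : 'M[C]_(n * m)) :
  \tr (id_tens Phi M *m X) =
  \sum_j \sum_i \tr (Phi (blk M j i) *m blk X i j).
Proof.
rewrite /mxtrace sum_tens; apply: eq_bigr => j _.
rewrite (eq_bigr (fun b => \sum_i \sum_a Phi (blk M j i) b a * blk X i j a b)).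
  rewrite exchange_big /=; apply: eq_bigr => i _.
  by apply: eq_bigr => b _; rewrite mxE.
move=> b _; rewrite mxE sum_tens; apply: eq_bigr => i _; apply: eq_bigr => a _.
by rewrite id_tensE !mxE.
Qed.

Lemma duality n m (Phi Psi : 'M[C]_m -> 'M[C]_m) (X : 'M[C]_(n * m))
  (v w : 'cV[C]_(n * m)) : is_dual_map Phi Psi ->
  (adjmx w *m id_tens Psi X *m v) 0 0 = \tr (id_tens Phi (v *m adjmx w) *m X).
Proof.
move=> hd; rewrite dual_lhs dual_rhs; apply: eq_bigr => j _; apply: eq_bigr => i _.
by rewrite hd.
Qed.

Lemma mulmx_diag_entry p q (A : 'M[C]_(p, q)) (P : 'M[C]_q) (B : 'M[C]_(q, p)) l :
  (A *m P *m B) l l = (row l A *m P *m col l B) 0 0.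
Proof.
rewrite !mxE; apply: eq_bigr => j _; rewrite !mxE; congr (_ * _).
by apply: eq_bigr => k _; rewrite !mxE.
Qed.

Local Open Scope sesquilinear_scope.

Lemma adjmx_tC p q (A : 'M[C]_(p, q)) : A ^t* = adjmx A.
Proof. by rewrite /adjmx map_trmx. Qed.

Lemma psd_factor N (P : 'M[C]_N) : psd P -> exists B : 'M[C]_N, P = B *m adjmx B.
Proof.
move=> [hadj hpos].
have Pt : P ^t* = P by rewrite adjmx_tC.
have Pn : P \is normalmx by apply/normalmxP; rewrite Pt.
have := orthomx_spectralP Pn.
set U := spectralmx P; set d := spectral_diag P => hP.
have Uu : U \is unitarymx by exact: spectral_unitarymx.
rewrite invmx_unitary // in hP.
have UU : U *m U ^t* = 1%:M by apply/unitarymxP.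
have dge0 : forall l, 0 <= d 0 l.
  move=> l.
  have -> : d 0 l = (U *m P *m U ^t*) l l.
    rewrite hP !mulmxA UU mul1mx -!mulmxA UU mulmx1 mxE eqxx mulr1n //.
  rewrite mulmx_diag_entry.
  have -> : row l U = adjmx (col l (U ^t*)).
    by apply/rowP => j; rewrite !mxE conjCK.
  exact: hpos.
pose s := \row_l sqrtC (d 0 l).
exists (U ^t* *m diag_mx s).
have hs : adjmx (diag_mx s) = diag_mx s.
  apply/matrixP => i j; rewrite !mxE rmorphMn /=.
  case: (eqVneq i j) => [->|hij]; last by rewrite ?(negbTE hij) ?(negbTE (negbT hij)) ?eq_sym ?(negbTE hij) !mulr0n.
  by rewrite conj_Creal // sqrtC_real.
rewrite {1}hP !adjmx_tC adjmxM adjmxK hs.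
rewrite mulmxA -[_ *m diag_mx s *m diag_mx s]mulmxA mulmx_diag.
congr (_ *m diag_mx _ *m _); apply/rowP => l; rewrite !mxE -expr2 sqrtCK //.
Qed.


Lemma tr_factor N K (B : 'M[C]_(N, K)) (X : 'M[C]_N) :
  \tr (B *m adjmx B *m X) = \sum_l (adjmx (col l B) *m X *m col l B) 0 0.
Proof.
rewrite -mulmxA mxtrace_mulC /mxtrace; apply: eq_bigr => l _.
rewrite [LHS]mulmx_diag_entry; have -> : row l (adjmx B) = adjmx (col l B).
  by apply/rowP => j; rewrite !mxE.
by [].
Qed.

Lemma tr_psd_ge0 N (P X : 'M[C]_N) : psd P -> psd X -> 0 <= \tr (P *m X).
Proof.
move=> /psd_factor [B ->] [_ hX]; rewrite tr_factor; apply: sumr_ge0 => l _.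
exact: hX.
Qed.

Lemma unit_entry_le1 N (w : 'cV[C]_N) p : unit_vec w -> `|w p 0| <= 1.
Proof.
rewrite /unit_vec mxE => hw.
have h : `|w p 0| ^+ 2 <= 1.
  rewrite -hw normCKC (bigD1 p) //= {1}adjmxE lerDl; apply: sumr_ge0 => q _.
  by rewrite adjmxE -normCKC exprn_ge0.
by rewrite -(expr_le1 (n := 2)).
Qed.

Lemma quad_bound N (X : 'M[C]_N) (v w : 'cV[C]_N) : unit_vec v -> unit_vec w ->
  `|(adjmx w *m X *m v) 0 0| <= \sum_q \sum_p `|X p q|.
Proof.
move=> hv hw; rewrite mxE; apply: le_trans (ler_norm_sum _ _ _) _.
apply: ler_sum => q _; rewrite normrM.
apply: le_trans (ler_wpM2l (normr_ge0 _) (unit_entry_le1 q hv)) _ ; rewrite mulr1.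
rewrite mxE; apply: le_trans (ler_norm_sum _ _ _) _.
apply: ler_sum => p _; rewrite normrM !mxE.
have := unit_entry_le1 p hw; rewrite -(norm_conjC (w p 0)) => h.
by apply: le_trans (ler_wpM2r (normr_ge0 _) h) _; rewrite mul1r.
Qed.


Lemma ge0_RC (z : C) : 0 <= z -> z = ((complex.Re z)%:C)%C.
Proof.
case: z => a b; rewrite lecE /= => /andP [/eqP hb _].
by rewrite hb.
Qed.

Lemma Re_le (x y : C) : x <= y -> complex.Re x <= complex.Re y.
Proof. by rewrite lecE => /andP []. Qed.

Definition Eset n m k (X : 'M[C]_(n * m)) : set R :=
  [set r : R | exists (v w : 'cV[C]_(n * m)),
         [/\ unit_vec v, unit_vec w,
             (schmidt_rank v <= k)%N, (schmidt_rank w <= k)%N &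
             r = cmod ((adjmx w *m X *m v) 0 0)]].

Lemma S_normE n m k (X : 'M[C]_(n * m)) : S_norm k X = sup (Eset k X).
Proof. by []. Qed.

Lemma Eset_ub n m k (X : 'M[C]_(n * m)) :
  ubound (Eset k X) (complex.Re (\sum_q \sum_p `|X p q|)).
Proof.
move=> r [v [w [hv hw _ _ ->]]]; rewrite /cmod.
exact/Re_le/quad_bound.
Qed.

Lemma Eset_le n m k (X : 'M[C]_(n * m)) r : Eset k X r -> r <= S_norm k X.
Proof.
move=> hr; rewrite S_normE; apply: sup_upper_bound => //.
split; first by exists r.
by exists (complex.Re (\sum_q \sum_p `|X p q|)); exact: Eset_ub.
Qed.


Lemma coef_mxZ n m (c : C) (u : 'cV[C]_(n * m)) : coef_mx (c *: u) = c *: coef_mx u.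
Proof. by apply/matrixP => i a; rewrite !mxE. Qed.

Lemma srZ n m (c : C) (u : 'cV[C]_(n * m)) :
  (schmidt_rank (c *: u) <= schmidt_rank u)%N.
Proof. by rewrite /schmidt_rank coef_mxZ -mul_scalar_mx mxrankM_maxr. Qed.

Lemma norm2_ge0_term N (u : 'cV[C]_N) p : 0 <= adjmx u 0 p * u p 0.
Proof. by rewrite adjmxE -normCKC exprn_ge0. Qed.

Lemma norm2_ge0 N (u : 'cV[C]_N) : 0 <= (adjmx u *m u) 0 0.
Proof.
rewrite mxE; apply: sumr_ge0 => p _.
by rewrite adjmxE -normCKC exprn_ge0.
Qed.

Lemma norm2_eq0 N (u : 'cV[C]_N) : (adjmx u *m u) 0 0 = 0 -> u = 0.
Proof.
rewrite mxE => h0.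
have h := psumr_eq0P (fun p _ => norm2_ge0_term u p) h0.
apply/matrixP => p j; rewrite (ord1 j) mxE.
have := h p isT; rewrite adjmxE -normCKC => /eqP.
by rewrite expf_eq0 /= normr_eq0 => /eqP.
Qed.

Lemma quad_le_S n m k (X : 'M[C]_(n * m)) (u : 'cV[C]_(n * m)) :
  psd X -> (schmidt_rank u <= k)%N ->
  (adjmx u *m X *m u) 0 0 <= ((S_norm k X)%:C)%C * (adjmx u *m u) 0 0.
Proof.
move=> hX hu.
have q_ge0 : 0 <= (adjmx u *m X *m u) 0 0 by case: hX => _; apply.
have t_ge0 := norm2_ge0 u.
case: (eqVneq ((adjmx u *m u) 0 0) 0) => ht.
  by have := norm2_eq0 ht => ->; rewrite !mulmx0 !mxE mulr0.
move: q_ge0 t_ge0 ht.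
set q := (adjmx u *m X *m u) 0 0; set t := (adjmx u *m u) 0 0 => q_ge0 t_ge0 ht.
have t_gt0 : 0 < t by rewrite lt_def ht t_ge0.
pose c := (sqrtC t)^-1.
have cR : c^* = c by rewrite conj_Creal // rpredV sqrtC_real.
have cc : c * c = t^-1 by rewrite -expr2 exprVn sqrtCK.
pose u' := c *: u.
have hu'1 : (adjmx u' *m u') 0 0 = t^-1 * t.
  by rewrite adjmxZ -scalemxAl -scalemxAr scalerA cR cc [X in X = _]mxE.
have hu'q : (adjmx u' *m X *m u') 0 0 = q / t.
  by rewrite adjmxZ -scalemxAl -scalemxAl -scalemxAr scalerA cR cc [X in X = _]mxE mulrC.
have hu' : unit_vec u' by rewrite /unit_vec hu'1 mulVf.
have sr' : (schmidt_rank u' <= k)%N by apply: leq_trans (srZ _ _) hu.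
have qt_ge0 : 0 <= q / t by rewrite divr_ge0 // ltW.
have hE : Eset k X (cmod (q / t)).
  by exists u', u'; split => //; rewrite hu'q.
have := Eset_le hE; rewrite /cmod ger0_norm // -lecR -ge0_RC //.
by rewrite ler_pdivrMr.
Qed.


Lemma sum_delta m (F : 'I_m -> C) a : \sum_c (1%:M : 'M[C]_m) a c * F c = F a.
Proof.
rewrite (bigD1 a) //= big1 ?addr0; first by rewrite mxE eqxx mul1r.
by move=> c hc; rewrite mxE eq_sym (negbTE hc) mul0r.
Qed.

Lemma sum_delta' m (F : 'I_m -> C) a : \sum_c F c * (1%:M : 'M[C]_m) c a = F a.
Proof.
rewrite (bigD1 a) //= big1 ?addr0; first by rewrite mxE eqxx mulr1.
by move=> c hc; rewrite mxE (negbTE hc) mulr0.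
Qed.

Lemma conj_id m (b d : 'I_m) : ((1%:M : 'M[C]_m) b d)^* = (1%:M : 'M[C]_m) d b.
Proof. by rewrite !mxE eq_sym; case: eqP => _; rewrite ?mulr1n ?mulr0n ?conjC1 ?conjC0. Qed.

Lemma tensL n r m p (W : 'M[C]_(n, r)) (M : 'M[C]_(r * m, p)) i a q :
  ((W *t 1%:M) *m M) (mxtens_index (i, a)) q
  = \sum_s W i s * M (mxtens_index (s, a)) q.
Proof.
rewrite mxE sum_tens; apply: eq_bigr => s _.
rewrite (eq_bigr (fun c => W i s * ((1%:M : 'M[C]_m) a c * M (mxtens_index (s, c)) q))).
  by rewrite -mulr_sumr sum_delta.
by move=> c _; rewrite tensmxE mulrA.
Qed.

Lemma tensR n r m p (W : 'M[C]_(n, r)) (N : 'M[C]_(p, r * m)) q j b :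
  (N *m adjmx (W *t 1%:M)) q (mxtens_index (j, b))
  = \sum_t N q (mxtens_index (t, b)) * (W j t)^*.
Proof.
rewrite mxE sum_tens; apply: eq_bigr => t _.
rewrite (eq_bigr (fun d => (N q (mxtens_index (t, d)) * (W j t)^*) * (1%:M : 'M[C]_m) d b)).
  by rewrite sum_delta'.
by move=> d _; rewrite adjmxE tensmxE rmorphM /= conj_id mulrA.
Qed.

Lemma tensE1 n r m (W : 'M[C]_(n, r)) (M : 'M[C]_(r * m)) i a j b :
  ((W *t 1%:M) *m M *m adjmx (W *t 1%:M)) (mxtens_index (i, a)) (mxtens_index (j, b))
  = \sum_s \sum_t W i s * (W j t)^* * M (mxtens_index (s, a)) (mxtens_index (t, b)).
Proof.
rewrite tensR exchange_big /=; apply: eq_bigr => t _.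
rewrite tensL mulr_suml; apply: eq_bigr => s _.
by rewrite mulrAC.
Qed.


Lemma id_tens_conj n r m (Phi : {linear 'M[C]_m -> 'M[C]_m}) (W : 'M[C]_(n, r))
  (M : 'M[C]_(r * m)) :
  id_tens Phi ((W *t 1%:M) *m M *m adjmx (W *t 1%:M))
  = (W *t 1%:M) *m id_tens Phi M *m adjmx (W *t 1%:M).
Proof.
apply/matrixP => p q; case: (mxtens_indexP p) => i a; case: (mxtens_indexP q) => j b.
rewrite id_tensE tensE1.
have -> : blk ((W *t 1%:M) *m M *m adjmx (W *t 1%:M)) i j =
    \sum_s \sum_t (W i s * (W j t)^*) *: blk M s t.
  apply/matrixP => a' b'; rewrite /blk [LHS]mxE tensE1 summxE.
  apply: eq_bigr => s _; rewrite summxE; apply: eq_bigr => t _.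
  by rewrite !mxE.
rewrite linear_sum summxE; apply: eq_bigr => s _.
rewrite linear_sum summxE; apply: eq_bigr => t _.
by rewrite linearZ mxE id_tensE.
Qed.


Lemma coef_tens n r m (W : 'M[C]_(n, r)) (b : 'cV[C]_(r * m)) :
  coef_mx ((W *t 1%:M) *m b) = W *m coef_mx b.
Proof.
apply/matrixP => i a; rewrite mxE tensL mxE; apply: eq_bigr => s _.
by rewrite mxE.
Qed.

Lemma coef_mx_inj n m (u u' : 'cV[C]_(n * m)) : coef_mx u = coef_mx u' -> u = u'.
Proof.
move=> h; apply/matrixP => p j; rewrite (ord1 j).
case: (mxtens_indexP p) => i a.
by have := congr1 (fun M : 'M[C]_(n, m) => M i a) h; rewrite !mxE.
Qed.

Lemma adjmx_tens p q p' q' (A : 'M[C]_(p, q)) (B : 'M[C]_(p', q')) :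
  adjmx (A *t B) = adjmx A *t adjmx B.
Proof.
apply/matrixP => x y; case: (mxtens_indexP x) => i a; case: (mxtens_indexP y) => j b.
by rewrite adjmxE !tensmxE !adjmxE rmorphM.
Qed.

Lemma adjmx1 m : adjmx (1%:M : 'M[C]_m) = 1%:M.
Proof. by apply/matrixP => i j; rewrite adjmxE conj_id. Qed.

Lemma tens11 n m : (1%:M : 'M[C]_n) *t (1%:M : 'M[C]_m) = 1%:M.
Proof.
apply/matrixP => x y; case: (mxtens_indexP x) => i a; case: (mxtens_indexP y) => j b.
rewrite tensmxE !mxE (inj_eq (can_inj (@mxtens_indexK n m))) xpair_eqE.
by case: (i == j); case: (a == b); rewrite ?mulr1n ?mulr0n ?mulr1 ?mulr0.
Qed.

Lemma tens_iso n r m (W : 'M[C]_(n, r)) (b : 'cV[C]_(r * m)) :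
  adjmx W *m W = 1%:M ->
  adjmx ((W *t (1%:M : 'M[C]_m)) *m b) *m ((W *t 1%:M) *m b) = adjmx b *m b.
Proof.
move=> hW; rewrite adjmxM adjmx_tens adjmx1 -mulmxA (mulmxA (_ *t _)) tensmx_mul.
by rewrite hW mulmx1 tens11 mul1mx.
Qed.

Lemma tr_id_tens n m (Phi : 'M[C]_m -> 'M[C]_m) (M : 'M[C]_(n * m)) :
  trace_preserving Phi -> \tr (id_tens Phi M) = \tr M.
Proof.
move=> hTP; rewrite /mxtrace !sum_tens; apply: eq_bigr => i _.
rewrite (eq_bigr (fun a => Phi (blk M i i) a a)); last by move=> a _; rewrite id_tensE.
have := hTP (blk M i i); rewrite /mxtrace => ->.
by apply: eq_bigr => a _; rewrite mxE.
Qed.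

Lemma psd_rank1 N (x : 'cV[C]_N) : psd (x *m adjmx x).
Proof.
split; first by rewrite adjmxM adjmxK.
move=> y; rewrite mulmxA -(mulmxA (adjmx y *m x)).
have -> : adjmx x *m y = adjmx (adjmx y *m x) by rewrite adjmxM adjmxK.
by rewrite mxE big_ord1 adjmxE -normCK exprn_ge0.
Qed.


Lemma tr_S_bound n m k (Phi : {linear 'M[C]_m -> 'M[C]_m}) (X : 'M[C]_(n * m))
  (v : 'cV[C]_(n * m)) :
  psd X -> completely_positive Phi -> trace_preserving Phi ->
  (schmidt_rank v <= k)%N ->
  \tr (id_tens Phi (v *m adjmx v) *m X) <= ((S_norm k X)%:C)%C * (adjmx v *m v) 0 0.
Proof.
move=> hX hCP hTP hv.
set Cm := coef_mx v.
set r := \rank Cm^T.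
have hrn : (r <= n)%N by exact: rank_leq_col.
have hrk : (r <= k)%N by rewrite /r mxrank_tr.
set U := schmidt (row_base Cm^T).
have Uu : U *m U^t* = 1%:M by apply/unitarymxP; exact: schmidt_unitarymx.
have hsub : (Cm^T <= U)%MS.
  by apply: submx_trans (schmidt_sub _); rewrite eq_row_base.
have [D hD] := submxP hsub.
set W := U^T.
have hW : adjmx W *m W = 1%:M by rewrite /adjmx /W -trmx_mul Uu trmx1.
set G := D^T.
have hCm : Cm = W *m G by rewrite /W /G -trmx_mul -hD trmxK.
pose vt : 'cV[C]_(r * m) := \col_p G (mxtens_unindex p).1 (mxtens_unindex p).2.
have hvt : coef_mx vt = G by apply/matrixP => s a; rewrite !mxE mxtens_indexK.
set T := W *t (1%:M : 'M[C]_m).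
have hvT : v = T *m vt by apply: coef_mx_inj; rewrite coef_tens hvt -hCm.
have hQ : psd (id_tens Phi (vt *m adjmx vt)) := hCP _ _ (psd_rank1 vt).
have [B hB] := psd_factor hQ.
have -> : id_tens Phi (v *m adjmx v) = (T *m B) *m adjmx (T *m B).
  rewrite hvT adjmxM mulmxA -(mulmxA T vt) id_tens_conj hB adjmxM.
  by rewrite !mulmxA.
rewrite tr_factor.
have hnorm : \sum_l (adjmx (col l B) *m col l B) 0 0 = (adjmx v *m v) 0 0.
  have := tr_factor B 1%:M; rewrite mulmx1 -hB tr_id_tens // mxtrace_mulC trace_mx11.
  under eq_bigr do rewrite mulmx1.
  move=> <-; rewrite hvT tens_iso //.
rewrite -hnorm mulr_sumr; apply: ler_sum => l _.
have hcol : col l (T *m B) = T *m col l B by rewrite !colE mulmxA.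
have hsr : (schmidt_rank (T *m col l B) <= k)%N.
  rewrite /schmidt_rank coef_tens; apply: leq_trans (mxrankM_maxl _ _) _.
  exact: leq_trans (rank_leq_col _) hrk.
rewrite hcol; apply: le_trans (quad_le_S hX hsr) _.
by rewrite tens_iso.
Qed.


Lemma conj_from_real (T1 T2 : C) : (T1 + T2)^* = T1 + T2 ->
  ('i * (T2 - T1))^* = 'i * (T2 - T1) -> T2 = T1^*.
Proof.
move=> h1 h2.
rewrite rmorphD /= in h1; rewrite rmorphM rmorphB /= conjCi in h2.
have hi : 'i != 0 :> C by rewrite neq0Ci.
have h2' : T1^* - T2^* = T2 - T1.
  by apply: (mulfI hi); rewrite -h2; ring.
have : (T1^* + T2^*) + (T1^* - T2^*) = (T1 + T2) + (T2 - T1) by rewrite h1 h2'.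
have -> : T1^* + T2^* + (T1^* - T2^*) = T1^* * 2 by ring.
have -> : T1 + T2 + (T2 - T1) = T2 * 2 by ring.
by move/(mulIf _) => -> //; rewrite pnatr_eq0.
Qed.

Lemma blkD n m (M N : 'M[C]_(n * m)) i j : blk (M + N) i j = blk M i j + blk N i j.
Proof. by apply/matrixP => a b; rewrite !mxE. Qed.

Lemma blkZ n m (c : C) (M : 'M[C]_(n * m)) i j : blk (c *: M) i j = c *: blk M i j.
Proof. by apply/matrixP => a b; rewrite !mxE. Qed.

Lemma id_tensD n m (Phi : {linear 'M[C]_m -> 'M[C]_m}) (M N : 'M[C]_(n * m)) :
  id_tens Phi (M + N) = id_tens Phi M + id_tens Phi N.
Proof.
apply/matrixP => p q; case: (mxtens_indexP p) => i a; case: (mxtens_indexP q) => j b.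
by rewrite [RHS]mxE !id_tensE blkD linearD mxE.
Qed.

Lemma id_tensZ n m (Phi : {linear 'M[C]_m -> 'M[C]_m}) (c : C) (M : 'M[C]_(n * m)) :
  id_tens Phi (c *: M) = c *: id_tens Phi M.
Proof.
apply/matrixP => p q; case: (mxtens_indexP p) => i a; case: (mxtens_indexP q) => j b.
by rewrite [RHS]mxE !id_tensE blkZ linearZ mxE.
Qed.

Lemma outer_expand N (v w : 'cV[C]_N) (c : C) :
  (v + c *: w) *m adjmx (v + c *: w) =
  v *m adjmx v + c^* *: (v *m adjmx w) + c *: (w *m adjmx v) + (c * c^*) *: (w *m adjmx w).
Proof.
rewrite adjmxD adjmxZ mulmxDl !mulmxDr -!scalemxAl -!scalemxAr scalerA.
by rewrite !addrA.
Qed.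


Lemma cmod_ge0 (z : C) : 0 <= cmod z.
Proof. by have := Re_le (normr_ge0 z). Qed.

Lemma cs_core (A B T1 T2 : C) (S : R) (f : C -> C) :
  (forall c, f c = A + c^* * T1 + c * T2 + c * c^* * B) ->
  (forall c, 0 <= f c) -> 0 <= A -> 0 <= B ->
  A <= (S%:C)%C -> B <= (S%:C)%C -> 0 <= S -> cmod T1 <= S.
Proof.
move=> hf hf0 hA0 hB0 hAS hBS S0.
have hA : A^* = A by rewrite conj_Creal // ger0_real.
have hB : B^* = B by rewrite conj_Creal // ger0_real.
have hr : forall c, (f c)^* = f c by move=> c; rewrite conj_Creal // ger0_real.
have h1 : (T1 + T2)^* = T1 + T2.
  have -> : T1 + T2 = f 1 - A - B by rewrite hf conjC1 !mul1r; ring.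
  by rewrite !rmorphB /= hr hA hB.
have h2 : ('i * (T2 - T1))^* = 'i * (T2 - T1).
  have -> : 'i * (T2 - T1) = f 'i - A - B.
    by rewrite hf conjCi mulrN -expr2 sqrCi opprK mul1r; ring.
  by rewrite !rmorphB /= hr hA hB.
have hT2 := conj_from_real h1 h2.
case: (eqVneq T1 0) => [->|hT].
  by rewrite /cmod normr0.
have ha0 : 0 < `|T1| by rewrite normr_gt0.
have ha : `|T1| != 0 by rewrite normr_eq0.
have haR : (`|T1|)^* = `|T1| by rewrite conj_Creal // normr_real.
have hTc : T1^* = `|T1| ^+ 2 / T1 by rewrite normCK [T1 * _]mulrC mulfK.
have := hf0 (- (T1 / `|T1|)).
rewrite hf hT2 rmorphN rmorphM /= fmorphV /= haR hTc.
have e : A + - (`|T1| ^+ 2 / T1 / `|T1|) * T1 + - (T1 / `|T1|) * (`|T1| ^+ 2 / T1) +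
  - (T1 / `|T1|) * - (`|T1| ^+ 2 / T1 / `|T1|) * B = A + B - `|T1| *+ 2.
  move: ha hT; set a := `|T1|; move=> ha hT.
  by field; apply/andP; split; [exact: ha | exact: hT].
rewrite e subr_ge0 => hle.
have : `|T1| *+ 2 <= (S%:C)%C *+ 2.
  by apply: le_trans hle _; rewrite mulr2n lerD.
rewrite ler_pMn2r // => /Re_le.
by rewrite /cmod.
Qed.

Lemma main_ineq n m k (Phi : {linear 'M[C]_m -> 'M[C]_m}) (Psi : 'M[C]_m -> 'M[C]_m)
  (X : 'M[C]_(n * m)) (v w : 'cV[C]_(n * m)) :
  psd X -> completely_positive Phi -> trace_preserving Phi -> is_dual_map Phi Psi ->
  unit_vec v -> unit_vec w -> (schmidt_rank v <= k)%N -> (schmidt_rank w <= k)%N ->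
  cmod ((adjmx w *m id_tens Psi X *m v) 0 0) <= S_norm k X.
Proof.
move=> hX hCP hTP hd hv hw hsv hsw.
have S_ge0 : 0 <= S_norm k X.
  apply: le_trans (cmod_ge0 ((adjmx w *m X *m v) 0 0)) _.
  by apply: Eset_le; exists v, w; split.
rewrite (duality _ _ _ hd).
pose F := fun M => \tr (id_tens Phi M *m X).
have FD : forall M N, F (M + N) = F M + F N.
  by move=> M N; rewrite /F id_tensD mulmxDl mxtraceD.
have FZ : forall (a : C) M, F (a *: M) = a * F M.
  by move=> a M; rewrite /F id_tensZ -scalemxAl mxtraceZ.
have Fge0 : forall u : 'cV[C]_(n * m), 0 <= F (u *m adjmx u).
  by move=> u; exact: tr_psd_ge0 (hCP _ _ (psd_rank1 u)) hX.
have Freal : forall u : 'cV[C]_(n * m), (F (u *m adjmx u))^* = F (u *m adjmx u).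
  by move=> u; rewrite conj_Creal // ger0_real.
have expand : forall c : C, F ((v + c *: w) *m adjmx (v + c *: w)) =
    F (v *m adjmx v) + c^* * F (v *m adjmx w) + c * F (w *m adjmx v)
    + c * c^* * F (w *m adjmx w).
  by move=> c; rewrite outer_expand !FD !FZ.
apply: (@cs_core (F (v *m adjmx v)) (F (w *m adjmx w)) _ (F (w *m adjmx v)) _
  (fun c => F ((v + c *: w) *m adjmx (v + c *: w)))) => //.
- by have := tr_S_bound hX hCP hTP hsv; rewrite hv mulr1 => h; exact: h.
- by have := tr_S_bound hX hCP hTP hsw; rewrite hw mulr1 => h; exact: h.
Qed.


End Aux.
Theorem corollary4p8 (R : realType) (n m k : nat)
  (Hmn : (m <= n)%N) (Hk1 : (1 <= k)%N) (Hkm : (k <= m)%N)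
  (X : 'M[R[i]]_(n * m))
  (Phi : {linear 'M[R[i]]_m -> 'M[R[i]]_m}) (Phi_dual : 'M[R[i]]_m -> 'M[R[i]]_m) :
  psd X ->
  completely_positive Phi -> trace_preserving Phi ->
  is_dual_map Phi Phi_dual ->
  S_norm k (id_tens Phi_dual X) <= S_norm k X.
Proof.
move=> hX hCP hTP hd.
rewrite S_normE; apply: ge_sup; last first.
  move=> r; rewrite /Eset /= => -[v [w [hv hw hsv hsw ->]]].
  exact: (main_ineq hX hCP hTP hd hv hw hsv hsw).
have hm0 : (0 < m)%N by apply: leq_trans Hk1 Hkm.
have hn0 : (0 < n)%N by apply: leq_trans hm0 Hmn.
pose i0 : 'I_n := Ordinal hn0.
pose a0 : 'I_m := Ordinal hm0.
pose p0 := mxtens_index (i0, a0).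
pose e : 'cV[R[i]]_(n * m) := \col_p ((p == p0)%:R).
have he : unit_vec e.
  rewrite /unit_vec mxE (bigD1 p0) //= big1 ?addr0.
    by rewrite adjmxE !mxE eqxx /= conjC1 mulr1.
  by move=> p hp; rewrite !mxE (negbTE hp) /= mulr0.
have hse : (schmidt_rank e <= k)%N.
  rewrite /schmidt_rank; have -> : coef_mx e = delta_mx i0 a0.
    apply/matrixP => i a; rewrite !mxE (inj_eq (can_inj (@mxtens_indexK n m))).
    by rewrite xpair_eqE.
  by rewrite mxrank_delta.
by exists (cmod ((adjmx e *m id_tens Phi_dual X *m e) 0 0)), e, e; split.
Qed.
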